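(* Let $\mathbb{X},\mathbb{Y}$ be real normed linear spaces and let $T\in\mathbb{B}(\mathbb{X},\mathbb{Y})$ be a smooth point of $\mathbb{B}(\mathbb{X},\mathbb{Y})$ with $M_T\neq\emptyset$. Then: (i) $M_T=\{\pm x_0\}$ for some $x_0\in S_{\mathbb{X}}$; (ii) $Tx_0$ is a smooth point of $\mathbb{Y}$; (iii) for every norming sequence $\{x_n\}$ for $T$, $x_0\in\overline{\operatorname{span}\{x_n:n\in\mathbb{N}\}}$.
   Context: All spaces are real; $\mathbb{B}(\mathbb{X},\mathbb{Y})$ has the operator norm; $S_{\mathbb{X}}$ is the unit sphere; $M_T=\{x\in S_{\mathbb{X}}:\|Tx\|=\|T\|\}$. A norming sequence for $T$ is $\{x_n\}\subseteq S_{\mathbb{X}}$ with $\|Tx_n\|\to\|T\|$. A nonzero element $x$ of a normed space $\mathbb{Z}$ is smooth if there is a unique $f\in\mathbb{Z}^*$ with $\|f\|=1$ and $f(x)=\|x\|$. *)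

(* Defs.v *)
From Stdlib Require Import Reals ClassicalEpsilon.
Open Scope R_scope.

Record NormedSpace := {
  carrier :> Type;
  vzero : carrier;
  vadd : carrier -> carrier -> carrier;
  vopp : carrier -> carrier;
  vscal : R -> carrier -> carrier;
  vnorm : carrier -> R;
  vadd_assoc : forall x y z, vadd x (vadd y z) = vadd (vadd x y) z;
  vadd_comm : forall x y, vadd x y = vadd y x;
  vadd_0l : forall x, vadd vzero x = x;
  vadd_oppr : forall x, vadd x (vopp x) = vzero;
  vscal_addr : forall a x y, vscal a (vadd x y) = vadd (vscal a x) (vscal a y);
  vscal_addl : forall a b x, vscal (a + b) x = vadd (vscal a x) (vscal b x);
  vscal_mul : forall a b x, vscal a (vscal b x) = vscal (a * b) x;
  vscal_1 : forall x, vscal 1 x = x;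
  vnorm_eq0 : forall x, vnorm x = 0 -> x = vzero;
  vnorm_scal : forall a x, vnorm (vscal a x) = Rabs a * vnorm x;
  vnorm_triangle : forall x y, vnorm (vadd x y) <= vnorm x + vnorm y
}.

Arguments vzero {_}.
Arguments vadd {_} _ _.
Arguments vopp {_} _.
Arguments vscal {_} _ _.
Arguments vnorm {_} _.

Definition unit_sphere {X : NormedSpace} (x : X) : Prop := vnorm x = 1.

Definition is_linear {X Y : NormedSpace} (T : X -> Y) : Prop :=
  (forall x y, T (vadd x y) = vadd (T x) (T y)) /\
  (forall a x, T (vscal a x) = vscal a (T x)).

Record BoundedOp (X Y : NormedSpace) := {
  op :> X -> Y;
  op_linear : is_linear op;
  op_bounded : exists M, forall x, vnorm (op x) <= M * vnorm x
}.

Definition opnorm {X Y : NormedSpace} (T : BoundedOp X Y) : R :=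
  epsilon (inhabits 0)
    (fun c => is_lub (fun r => exists x : X, vnorm x <= 1 /\ r = vnorm (T x)) c).

Definition M_T {X Y : NormedSpace} (T : BoundedOp X Y) (x : X) : Prop :=
  unit_sphere x /\ vnorm (T x) = opnorm T.

Definition norming_sequence {X Y : NormedSpace} (T : BoundedOp X Y) (xs : nat -> X) : Prop :=
  (forall n, unit_sphere (xs n)) /\ Un_cv (fun n => vnorm (T (xs n))) (opnorm T).

Definition unit_functional {Z : NormedSpace} (f : Z -> R) : Prop :=
  (forall x y, f (vadd x y) = f x + f y) /\
  (forall a x, f (vscal a x) = a * f x) /\
  is_lub (fun r => exists z : Z, vnorm z <= 1 /\ r = Rabs (f z)) 1.

Definition smooth {Z : NormedSpace} (x : Z) : Prop :=
  x <> vzero /\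
  (exists f : Z -> R, unit_functional f /\ f x = vnorm x) /\
  (forall f g : Z -> R,
      unit_functional f -> f x = vnorm x ->
      unit_functional g -> g x = vnorm x ->
      forall z, f z = g z).

(* Linearity of a functional on B(X,Y) is stated relationally (for operators
   U = S + T, resp. U = a S pointwise), which is what it unfolds to. *)
Definition op_unit_functional {X Y : NormedSpace} (f : BoundedOp X Y -> R) : Prop :=
  (forall S T U : BoundedOp X Y,
      (forall x, U x = vadd (S x) (T x)) -> f U = f S + f T) /\
  (forall (a : R) (S U : BoundedOp X Y),
      (forall x, U x = vscal a (S x)) -> f U = a * f S) /\
  is_lub (fun r => exists S : BoundedOp X Y, opnorm S <= 1 /\ r = Rabs (f S)) 1.

Definition op_smooth {X Y : NormedSpace} (T : BoundedOp X Y) : Prop :=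
  (exists x, T x <> vzero) /\
  (exists f, op_unit_functional f /\ f T = opnorm T) /\
  (forall f g : BoundedOp X Y -> R,
      op_unit_functional f -> f T = opnorm T ->
      op_unit_functional g -> g T = opnorm T ->
      forall S, f S = g S).

Fixpoint lin_comb {X : NormedSpace} (c : nat -> R) (xs : nat -> X) (N : nat) : X :=
  match N with
  | O => vzero
  | S n => vadd (lin_comb c xs n) (vscal (c n) (xs n))
  end.

Definition in_closed_span {X : NormedSpace} (xs : nat -> X) (x : X) : Prop :=
  forall eps, 0 < eps ->
    exists (N : nat) (c : nat -> R), vnorm (vadd x (vopp (lin_comb c xs N))) < eps.

(* Main.v *)
Require Import Defs.
From Stdlib Require Import Reals Lra Lia ClassicalEpsilon Classical FunctionalExtensionality.
From mathcomp Require ssreflect ssrfun ssrbool boolp classical_sets.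
Set Bullet Behavior "Strict Subproofs".
Open Scope R_scope.

Module ZornM.
Import ssreflect ssrfun ssrbool.
Import boolp classical_sets.
Local Open Scope classical_set_scope.
Lemma zorn_prop (T : Type) (P : (T -> Prop) -> Prop) :
  (forall F : (T -> Prop) -> Prop, (forall X, F X -> P X) ->
     (forall A B, F A -> F B -> (forall x, A x -> B x) \/ (forall x, B x -> A x)) ->
     P (fun x => exists X, F X /\ X x)) ->
  exists A, P A /\ forall B, (forall x, A x -> B x) -> P B -> forall x, B x -> A x.
Proof.
move=> H.
have [|A [PA Am]] := @Zorn_bigcup T P.
  move=> F FP tot.
  have -> : (\bigcup_(X in F) X) = (fun x => exists X, F X /\ X x).
    by apply/funext=> x; apply/propext; split=> [[X FX Xx]|[X [FX Xx]]]; [exists X|exists X].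
  apply: H => // A B FA FB; exact: tot.
exists A; split => // B AB PB x Bx.
apply: contrapT => nAx; apply: (Am B) => //; split => // BA.
by apply: nAx; apply: BA.
Qed.
End ZornM.
Set Bullet Behavior "Strict Subproofs".

Record VSpace := {
  vs_car :> Type;
  vs_zero : vs_car;
  vs_add : vs_car -> vs_car -> vs_car;
  vs_opp : vs_car -> vs_car;
  vs_scal : R -> vs_car -> vs_car;
  vs_add_assoc : forall x y z, vs_add x (vs_add y z) = vs_add (vs_add x y) z;
  vs_add_comm : forall x y, vs_add x y = vs_add y x;
  vs_add_0l : forall x, vs_add vs_zero x = x;
  vs_add_oppr : forall x, vs_add x (vs_opp x) = vs_zero;
  vs_scal_addr : forall a x y, vs_scal a (vs_add x y) = vs_add (vs_scal a x) (vs_scal a y);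
  vs_scal_addl : forall a b x, vs_scal (a + b) x = vs_add (vs_scal a x) (vs_scal b x);
  vs_scal_mul : forall a b x, vs_scal a (vs_scal b x) = vs_scal (a * b) x;
  vs_scal_1 : forall x, vs_scal 1 x = x }.
Arguments vs_zero {_}.
Arguments vs_add {_} _ _.
Arguments vs_opp {_} _.
Arguments vs_scal {_} _ _.
Arguments vs_add_assoc {_} _ _ _.
Arguments vs_add_comm {_} _ _.
Arguments vs_add_0l {_} _.
Arguments vs_add_oppr {_} _.
Arguments vs_scal_addr {_} _ _ _.
Arguments vs_scal_addl {_} _ _ _.
Arguments vs_scal_mul {_} _ _ _.
Arguments vs_scal_1 {_} _.

Section VSLemmas.
Variable V : VSpace.
Notation "x +v y" := (vs_add x y) (at level 50, left associativity).
Notation "a *v x" := (vs_scal a x) (at level 40).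

Lemma vs_add0r (x : V) : x +v vs_zero = x.
Proof. rewrite vs_add_comm. apply vs_add_0l. Qed.

Lemma vs_cancel_l (x y z : V) : x +v y = x +v z -> y = z.
Proof.
intro H. assert (E : forall w, vs_opp x +v (x +v w) = w).
{ intro w. rewrite vs_add_assoc, (vs_add_comm (vs_opp x) x), vs_add_oppr. apply vs_add_0l. }
rewrite <- (E y), <- (E z), H. reflexivity.
Qed.

Lemma vs_scal0 (x : V) : 0 *v x = vs_zero.
Proof.
symmetry. apply (vs_cancel_l (0 *v x)). rewrite vs_add0r, <- vs_scal_addl.
f_equal. ring.
Qed.

Lemma vs_scalz (a : R) : a *v (vs_zero : V) = vs_zero.
Proof. rewrite <- (vs_scal0 (vs_zero : V)) at 1. rewrite vs_scal_mul, Rmult_0_r. apply vs_scal0. Qed.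

Lemma vs_addm1 (x : V) : x +v (-1) *v x = vs_zero.
Proof.
rewrite <- (vs_scal_1 x) at 1. rewrite <- vs_scal_addl.
replace (1 + -1) with 0 by ring. apply vs_scal0.
Qed.

Lemma vs_opp_scal (x : V) : vs_opp x = (-1) *v x.
Proof. apply (vs_cancel_l x). rewrite vs_add_oppr, vs_addm1. reflexivity. Qed.

Lemma vs_swap4 (a b c d : V) : (a +v b) +v (c +v d) = (a +v c) +v (b +v d).
Proof.
rewrite !vs_add_assoc. f_equal. rewrite <- !vs_add_assoc. f_equal. apply vs_add_comm.
Qed.

Lemma vs_scal_sub (a b : R) (y : V) : a *v y +v (- b) *v y = (a - b) *v y.
Proof. rewrite <- vs_scal_addl. reflexivity. Qed.

Lemma vs_scal_inj (a b : R) (y : V) : a *v y = b *v y -> a <> b -> y = vs_zero.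
Proof.
intros H hab.
assert (E : (a - b) *v y = vs_zero).
{ rewrite <- vs_scal_sub, H, vs_scal_sub. replace (b - b) with 0 by ring. apply vs_scal0. }
rewrite <- (vs_scal_1 y). replace 1 with (/(a-b) * (a - b)) by (field; lra).
rewrite <- vs_scal_mul, E. apply vs_scalz.
Qed.

Lemma vs_diff (u u' v : V) (t t' : R) :
  u +v t *v v = u' +v t' *v v -> u +v (-1) *v u' = (t' - t) *v v.
Proof.
intro H.
assert (H2 := f_equal (fun w => w +v ((-1) *v u' +v (- t) *v v)) H). simpl in H2.
rewrite (vs_swap4 u), (vs_swap4 u') in H2. rewrite vs_addm1, vs_scal_sub, vs_scal_sub in H2.
replace (t - t) with 0 in H2 by ring. rewrite vs_scal0, vs_add0r, vs_add_0l in H2.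
exact H2.
Qed.

Lemma vs_scal_eq_from (x y : V) (a : R) : x +v (- a) *v y = vs_zero -> x = a *v y.
Proof.
intro H. apply (vs_cancel_l ((- a) *v y)). rewrite vs_add_comm, H.
rewrite <- vs_scal_addl. replace (-a + a) with 0 by ring. symmetry; apply vs_scal0.
Qed.

End VSLemmas.

Section HB.
Variable V : VSpace.
Notation "x +v y" := (vs_add x y) (at level 50, left associativity).
Notation "a *v x" := (vs_scal a x) (at level 40).
Variable U : V -> Prop.
Hypothesis U_add : forall x y, U x -> U y -> U (x +v y).
Hypothesis U_scal : forall a x, U x -> U (a *v x).
Variable p : V -> R.
Hypothesis p_add : forall x y, U x -> U y -> p (x +v y) <= p x + p y.
Hypothesis p_pos : forall t x, 0 < t -> U x -> p (t *v x) = t * p x.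

Definition Cond (G : V -> R -> Prop) : Prop :=
  (forall w a, G w a -> U w) /\
  (forall w a b, G w a -> G w b -> a = b) /\
  (forall u a w b, G u a -> G w b -> G (u +v w) (a + b)) /\
  (forall t u a, G u a -> G (t *v u) (t * a)) /\
  (forall w a, G w a -> a <= p w).

Lemma hb_step (G : V -> R -> Prop) (v : V) :
  Cond G -> (exists w a, G w a) -> U v -> (forall a, ~ G v a) ->
  exists G', Cond G' /\ (forall w a, G w a -> G' w a) /\ exists c, G' v c.
Proof.
intros [HU [Hf [Ha [Hs Hd]]]] [w0 [a0 G0]] Uv nv.
set (A := fun r => exists w b, G w b /\ r = b - p (w +v (-1) *v v)).
assert (key : forall w b w' b', G w b -> G w' b' ->
          b - p (w +v (-1) *v v) <= p (w' +v v) - b').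
{ intros w b w' b' Gw Gw'.
  assert (E : w +v w' = (w +v (-1) *v v) +v (w' +v v)).
  { rewrite vs_swap4. rewrite (vs_add_comm ((-1) *v v)), vs_addm1, vs_add0r. reflexivity. }
  assert (H1 := Hd _ _ (Ha _ _ _ _ Gw Gw')). rewrite E in H1.
  assert (H2 := p_add _ _ (U_add _ _ (HU _ _ Gw) (U_scal (-1) _ Uv))
                        (U_add _ _ (HU _ _ Gw') Uv)). lra. }
assert (bA : bound A).
{ exists (p (w0 +v v) - a0). intros r [w [b [Gw ->]]]. apply (key _ _ _ _ Gw G0). }
assert (nA : exists r, A r) by (eexists; exists w0, a0; split; [exact G0| reflexivity]).
destruct (completeness A bA nA) as [c [cub cl]].
assert (c_le : forall w b, G w b -> c <= p (w +v v) - b).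
{ intros w b Gw. apply cl. intros r [w' [b' [Gw' ->]]]. apply (key _ _ _ _ Gw' Gw). }
assert (c_ge : forall w b, G w b -> b - p (w +v (-1) *v v) <= c).
{ intros w b Gw. apply cub. exists w, b. split; auto. }
exists (fun w b => exists u a t, G u a /\ w = u +v t *v v /\ b = a + t * c).
split; [| split].
- split; [| split; [| split; [| split]]].
  + intros w b [u [a [t [Gu [-> _]]]]]. apply U_add; [eapply HU; eauto| apply U_scal; auto].
  + intros w b1 b2 [u1 [a1 [t1 [G1 [-> ->]]]]] [u2 [a2 [t2 [G2 [E ->]]]]].
    destruct (Req_dec t1 t2) as [<- | nt].
    * rewrite (vs_add_comm u1), (vs_add_comm u2) in E. apply vs_cancel_l in E. subst.
      rewrite (Hf _ _ _ G1 G2). reflexivity.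
    * exfalso. apply vs_diff in E.
      assert (G3 := Hs (/(t2 - t1)) _ _ (Ha _ _ _ _ G1 (Hs (-1) _ _ G2))).
      rewrite E, vs_scal_mul in G3. replace (/ (t2 - t1) * (t2 - t1)) with 1 in G3
        by (field; intro; apply nt; lra).
      rewrite vs_scal_1 in G3. eapply nv; eauto.
  + intros w1 b1 w2 b2 [u1 [a1 [t1 [G1 [-> ->]]]]] [u2 [a2 [t2 [G2 [-> ->]]]]].
    exists (u1 +v u2), (a1 + a2), (t1 + t2). split; [auto| split].
    * rewrite vs_swap4, vs_scal_addl. reflexivity.
    * ring.
  + intros s w b [u [a [t [Gu [-> ->]]]]].
    exists (s *v u), (s * a), (s * t). split; [auto| split].
    * rewrite vs_scal_addr, vs_scal_mul. reflexivity.
    * ring.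
  + intros w b [u [a [t [Gu [-> ->]]]]].
    destruct (Rtotal_order t 0) as [tn | [t0 | tp]].
    * set (s := - t).
      assert (sp : 0 < s) by (unfold s; lra).
      assert (Gi := Hs (/ s) _ _ Gu).
      assert (H1 := c_ge _ _ Gi).
      assert (E : u +v t *v v = s *v ((/ s) *v u +v (-1) *v v)).
      { rewrite vs_scal_addr, !vs_scal_mul. replace (s * / s) with 1 by (field; lra).
        rewrite vs_scal_1. f_equal. f_equal. unfold s; ring. }
      rewrite E, p_pos; auto.
      2:{ apply U_add; apply U_scal; [eapply HU; eauto| auto]. }
      set (P := p (/ s *v u +v -1 *v v)) in *.
      assert (H2 : s * (/ s * a - P) <= s * c) by (apply Rmult_le_compat_l; lra).
      replace (s * (/ s * a - P)) with (a - s * P) in H2 by (field; lra).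
      unfold s in *. lra.
    * subst t. rewrite vs_scal0, vs_add0r, Rmult_0_l, Rplus_0_r. auto.
    * assert (Gi := Hs (/ t) _ _ Gu).
      assert (H1 := c_le _ _ Gi).
      assert (E : u +v t *v v = t *v ((/ t) *v u +v v)).
      { rewrite vs_scal_addr, !vs_scal_mul. replace (t * / t) with 1 by (field; lra).
        rewrite vs_scal_1. reflexivity. }
      rewrite E, p_pos; auto.
      2:{ apply U_add; [apply U_scal; eapply HU; eauto| auto]. }
      set (P := p (/ t *v u +v v)) in *.
      assert (H2 : t * c <= t * (P - / t * a)) by (apply Rmult_le_compat_l; lra).
      replace (t * (P - / t * a)) with (t * P - a) in H2 by (field; lra).
      lra.
- intros w a Gw. exists w, a, 0. split; [auto| split].
  + rewrite vs_scal0, vs_add0r. reflexivity.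
  + ring.
- exists c, (0 *v w0), (0 * a0), 1. split; [auto| split].
  + rewrite vs_scal0, vs_add_0l, vs_scal_1. reflexivity.
  + ring.
Qed.

Theorem hahn_banach (Gam : V -> R -> Prop) :
  Cond Gam -> (exists w a, Gam w a) ->
  exists f : V -> R,
    (forall x y, U x -> U y -> f (x +v y) = f x + f y) /\
    (forall t x, U x -> f (t *v x) = t * f x) /\
    (forall x, U x -> f x <= p x) /\
    (forall w a, Gam w a -> f w = a).
Proof.
intros CG neG.
set (P := fun (X : (V * R) -> Prop) => Cond (fun w a => X (w, a) \/ Gam w a)).
destruct (ZornM.zorn_prop (V * R) P) as [A [PA Amax]].
- intros F FP ch.
  assert (two : forall q1 q2, ((exists X, F X /\ X q1) \/ Gam (fst q1) (snd q1)) ->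
                ((exists X, F X /\ X q2) \/ Gam (fst q2) (snd q2)) ->
          exists X, P X /\ (forall q, X q -> exists Y, F Y /\ Y q) /\
             (X q1 \/ Gam (fst q1) (snd q1)) /\ (X q2 \/ Gam (fst q2) (snd q2))).
  { intros q1 q2 [[X1 [F1 X1q]] | g1] [[X2 [F2 X2q]] | g2].
    - destruct (ch _ _ F1 F2) as [s | s].
      + exists X2. split; [auto| split; [eauto| auto]].
      + exists X1. split; [auto| split; [eauto| auto]].
    - exists X1. split; [auto| split; [eauto| auto]].
    - exists X2. split; [auto| split; [eauto| auto]].
    - exists (fun _ => False). split; [| split; [intros q []| auto]].
      unfold P. destruct CG as [c1 [c2 [c3 [c4 c5]]]].
      split; [| split; [| split; [| split]]].
      + intros w a [[] | g]; eauto.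
      + intros w a b [[] | g] [[] | g']; eauto.
      + intros u a w b [[] | g] [[] | g']; eauto.
      + intros t u a [[] | g]; eauto.
      + intros w a [[] | g]; eauto. }
  split; [| split; [| split; [| split]]].
  + intros w a H. destruct (two (w, a) (w, a) H H) as [X [PX [_ [h _]]]].
    apply (proj1 PX _ _ h).
  + intros w a b H1 H2. destruct (two (w, a) (w, b) H1 H2) as [X [PX [_ [h1 h2]]]].
    apply (proj1 (proj2 PX) _ _ _ h1 h2).
  + intros u a w b H1 H2. destruct (two (u, a) (w, b) H1 H2) as [X [PX [sub [h1 h2]]]].
    destruct (proj1 (proj2 (proj2 PX)) _ _ _ _ h1 h2) as [h | h]; [left; apply sub; exact h| right; exact h].
  + intros t u a H. destruct (two (u, a) (u, a) H H) as [X [PX [sub [h1 _]]]].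
    destruct (proj1 (proj2 (proj2 (proj2 PX))) t _ _ h1) as [h | h]; [left; apply sub; exact h| right; exact h].
  + intros w a H. destruct (two (w, a) (w, a) H H) as [X [PX [_ [h _]]]].
    apply (proj2 (proj2 (proj2 (proj2 PX))) _ _ h).
- set (G := fun w a => A (w, a) \/ Gam w a) in *.
  assert (neGG : exists w a, G w a) by (destruct neG as [w [a g]]; exists w, a; right; exact g).
  assert (tot : forall v, U v -> exists a, G v a).
  { intros v Uv. apply NNPP. intro nv.
    destruct (hb_step G v PA neGG Uv (fun a h => nv (ex_intro _ a h))) as [G' [CG' [sub [c Gc]]]].
    assert (PB : P (fun q => G' (fst q) (snd q))).
    { unfold P. destruct CG' as [c1 [c2 [c3 [c4 c5]]]].
      assert (e : forall w a, (G' w a \/ Gam w a) -> G' w a).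
      { intros w a [h | h]; [exact h| apply sub; right; exact h]. }
      split; [| split; [| split; [| split]]]; simpl.
      + intros w a h; eauto.
      + intros w a b h1 h2; eauto.
      + intros u a w b h1 h2; left; eauto.
      + intros t u a h; left; eauto.
      + intros w a h; eauto. }
    assert (AB : forall q, A q -> G' (fst q) (snd q)).
    { intros [w a] h. apply sub. left. exact h. }
    apply nv. exists c. left. exact (Amax _ AB PB (v, c) Gc). }
  destruct PA as [c1 [c2 [c3 [c4 c5]]]].
  exists (fun v => epsilon (inhabits 0) (fun a => G v a)).
  assert (spec : forall v, U v -> G v (epsilon (inhabits 0) (fun a => G v a))).
  { intros v Uv. apply epsilon_spec. apply tot; auto. }
  split; [| split; [| split]].
  + intros x y Ux Uy. apply (c2 (x +v y)). apply spec; auto. apply c3; apply spec; auto.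
  + intros t x Ux. apply (c2 (t *v x)). apply spec; auto. apply c4; apply spec; auto.
  + intros x Ux. apply c5. apply spec; auto.
  + intros w a g. apply (c2 w). apply spec. apply (c1 w a). right; exact g. right; exact g.
Qed.
End HB.

Definition vsN (Z : NormedSpace) : VSpace :=
  Build_VSpace Z vzero vadd vopp vscal (vadd_assoc Z) (vadd_comm Z) (vadd_0l Z)
    (vadd_oppr Z) (vscal_addr Z) (vscal_addl Z) (vscal_mul Z) (vscal_1 Z).

Lemma Rabs_m1 : Rabs (-1) = 1.
Proof. unfold Rabs; destruct (Rcase_abs (-1)); lra. Qed.

Section NormLemmas.
Variable Z : NormedSpace.
Lemma n_add0r (x : Z) : vadd x vzero = x.
Proof. exact (vs_add0r (vsN Z) x). Qed.
Lemma n_scal0 (x : Z) : vscal 0 x = vzero.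
Proof. exact (vs_scal0 (vsN Z) x). Qed.
Lemma n_scalz (a : R) : vscal a (vzero : Z) = vzero.
Proof. exact (vs_scalz (vsN Z) a). Qed.
Lemma n_addm1 (x : Z) : vadd x (vscal (-1) x) = vzero.
Proof. exact (vs_addm1 (vsN Z) x). Qed.
Lemma n_opp_scal (x : Z) : vopp x = vscal (-1) x.
Proof. exact (vs_opp_scal (vsN Z) x). Qed.
Lemma n_scal_inj (a b : R) (y : Z) : vscal a y = vscal b y -> a <> b -> y = vzero.
Proof. exact (vs_scal_inj (vsN Z) a b y). Qed.
Lemma n_swap4 (a b c d : Z) : vadd (vadd a b) (vadd c d) = vadd (vadd a c) (vadd b d).
Proof. exact (vs_swap4 (vsN Z) a b c d). Qed.
Lemma n_scal_eq_from (x y : Z) (a : R) : vadd x (vscal (- a) y) = vzero -> x = vscal a y.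
Proof. exact (vs_scal_eq_from (vsN Z) x y a). Qed.

Lemma norm0 : vnorm (vzero : Z) = 0.
Proof. rewrite <- (n_scal0 vzero), vnorm_scal, Rabs_R0. ring. Qed.
Lemma norm_nonneg (x : Z) : 0 <= vnorm x.
Proof.
assert (H := vnorm_triangle Z x (vscal (-1) x)). rewrite n_addm1, norm0, vnorm_scal in H.
rewrite Rabs_m1 in H. lra.
Qed.
Lemma norm_m1 (x : Z) : vnorm (vscal (-1) x) = vnorm x.
Proof. rewrite vnorm_scal, Rabs_m1. ring. Qed.
Lemma norm_pos (x : Z) : x <> vzero -> 0 < vnorm x.
Proof.
intro nx. destruct (norm_nonneg x) as [h | h]; auto. exfalso. apply nx. apply vnorm_eq0. auto.
Qed.
Lemma norm_normalize (x : Z) : x <> vzero -> vnorm (vscal (/ vnorm x) x) = 1.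
Proof.
intro nx. assert (hp := norm_pos x nx). rewrite vnorm_scal, Rabs_pos_eq.
field; lra. left; apply Rinv_0_lt_compat; auto.
Qed.
End NormLemmas.

Definition lin_fun {Z : NormedSpace} (f : Z -> R) : Prop :=
  (forall x y, f (vadd x y) = f x + f y) /\ (forall a x, f (vscal a x) = a * f x).

Lemma hb_norm (Z : NormedSpace) (Gam : Z -> R -> Prop) :
  Cond (vsN Z) (fun _ => True) vnorm Gam -> (exists w a, Gam w a) ->
  exists f : Z -> R, lin_fun f /\ (forall z, Rabs (f z) <= vnorm z) /\
     (forall w a, Gam w a -> f w = a).
Proof.
intros CG ne.
assert (pp : forall t (x : vsN Z), 0 < t -> True -> vnorm (vs_scal t x) = t * vnorm x).
{ intros t x tp _. simpl. rewrite vnorm_scal, Rabs_pos_eq; lra. }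
destruct (hahn_banach (vsN Z) (fun _ => True) (fun _ _ _ _ => I) (fun _ _ _ => I) vnorm
  (fun x y _ _ => vnorm_triangle Z x y) pp Gam CG ne) as [f [fa [fs [fd fe]]]].
exists f. split; [split|split; [|auto]].
- intros x y. apply fa; exact I.
- intros a x. apply fs; exact I.
- intro z. assert (h1 := fd z I). assert (h2 := fd (vscal (-1) z) I).
  change (f (vscal (-1) z) <= vnorm (vscal (-1) z)) in h2. assert (e : f (vscal (-1) z) = -1 * f z) by exact (fs (-1) z I). rewrite e in h2. rewrite norm_m1 in h2. apply Rabs_le. lra.
Qed.

Lemma lin_fun_zero (Z : NormedSpace) (f : Z -> R) : lin_fun f -> f vzero = 0.
Proof. intros [_ fs]. rewrite <- (n_scal0 Z vzero), fs. ring. Qed.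

Lemma support (Z : NormedSpace) (z : Z) : z <> vzero ->
  exists f : Z -> R, lin_fun f /\ (forall y, Rabs (f y) <= vnorm y) /\ f z = vnorm z.
Proof.
intro nz.
destruct (hb_norm Z (fun w a => exists t, w = vscal t z /\ a = t * vnorm z)) as [f [fl [fb fe]]].
- split; [| split; [| split; [| split]]].
  + auto.
  + intros w a b [t [-> ->]] [t' [E ->]]. destruct (Req_dec t t') as [<-|nt]; auto.
    exfalso. apply nz. exact (n_scal_inj Z _ _ _ E nt).
  + intros u a w b [t [-> ->]] [t' [-> ->]]. exists (t + t'). split.
    * simpl. rewrite vscal_addl. reflexivity.
    * ring.
  + intros s u a [t [-> ->]]. exists (s * t). split.
    * simpl. rewrite vscal_mul. reflexivity.
    * ring.
  + intros w a [t [-> ->]]. rewrite vnorm_scal.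
    apply Rmult_le_compat_r; [apply norm_nonneg| apply Rle_abs].
- exists z, (1 * vnorm z), 1. rewrite vscal_1. auto.
- exists f. split; [auto| split; auto]. apply fe. exists 1. rewrite vscal_1. split; auto; ring.
Qed.

Lemma unit_of_support (Z : NormedSpace) (f : Z -> R) (z : Z) : z <> vzero ->
  lin_fun f -> (forall y, Rabs (f y) <= vnorm y) -> f z = vnorm z -> unit_functional f.
Proof.
intros nz [fa fs] fb fz. split; [auto| split; [auto|]]. split.
- intros r [y [hy ->]]. eapply Rle_trans; [apply fb| auto].
- intros b ub. apply ub. exists (vscal (/ vnorm z) z). split.
  + rewrite norm_normalize; auto; lra.
  + rewrite fs, fz. assert (hp := norm_pos Z z nz).
    replace (/ vnorm z * vnorm z) with 1 by (field; lra). rewrite Rabs_R1. reflexivity.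
Qed.

Lemma unit_bound (Z : NormedSpace) (g : Z -> R) : unit_functional g ->
  lin_fun g /\ forall y, Rabs (g y) <= vnorm y.
Proof.
intros [ga [gs [gub _]]]. split; [split; auto|].
intro y. destruct (Req_dec (vnorm y) 0) as [h0 | hn].
- apply vnorm_eq0 in h0. subst. rewrite lin_fun_zero by (split; auto). rewrite norm0, Rabs_R0. lra.
- assert (ny : y <> vzero) by (intro; subst; apply hn; apply norm0).
  assert (hp := norm_pos Z y ny).
  assert (H' : / vnorm y * Rabs (g y) <= 1).
  { apply gub. exists (vscal (/ vnorm y) y). split.
    - rewrite norm_normalize; auto; lra.
    - rewrite gs, Rabs_mult, (Rabs_pos_eq (/ vnorm y)); auto.
      left; apply Rinv_0_lt_compat; auto. }
  apply (Rmult_le_compat_l (vnorm y)) in H'; [| lra].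
  replace (vnorm y * (/ vnorm y * Rabs (g y))) with (Rabs (g y)) in H' by (field; lra). lra.
Qed.

Section Ops.
Variables X Y : NormedSpace.

Definition VF : VSpace.
Proof.
refine (Build_VSpace (X -> Y) (fun _ => vzero) (fun F G x => vadd (F x) (G x))
  (fun F x => vopp (F x)) (fun a F x => vscal a (F x)) _ _ _ _ _ _ _ _);
intros; apply functional_extensionality; intro;
first [apply vadd_assoc | apply vadd_comm | apply vadd_0l | apply vadd_oppr | apply vscal_addr
      | apply vscal_addl | apply vscal_mul | apply vscal_1].
Defined.

Definition BL (F : X -> Y) : Prop :=
  is_linear F /\ exists M, forall x, vnorm (F x) <= M * vnorm x.

Definition pn (F : X -> Y) : R :=
  epsilon (inhabits 0)
    (fun c => is_lub (fun r => exists x : X, vnorm x <= 1 /\ r = vnorm (F x)) c).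

Lemma opnorm_pn (T : BoundedOp X Y) : opnorm T = pn (op X Y T).
Proof. reflexivity. Qed.

Lemma BL_op (T : BoundedOp X Y) : BL (op X Y T).
Proof. split; [apply op_linear| apply op_bounded]. Qed.

Lemma lin_zero (F : X -> Y) : is_linear F -> F vzero = vzero.
Proof. intros [_ fs]. rewrite <- (n_scal0 X vzero), fs. apply n_scal0. Qed.

Lemma pn_lub (F : X -> Y) : BL F ->
  is_lub (fun r => exists x : X, vnorm x <= 1 /\ r = vnorm (F x)) (pn F).
Proof.
intros [fl [M hM]]. unfold pn. apply epsilon_spec.
destruct (completeness (fun r => exists x : X, vnorm x <= 1 /\ r = vnorm (F x))) as [c hc].
- exists (Rabs M). intros r [x [hx ->]]. eapply Rle_trans; [apply hM|].
  assert (h0 := norm_nonneg X x).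
  apply Rle_trans with (Rabs M * vnorm x).
  + apply Rmult_le_compat_r; auto. apply Rle_abs.
  + assert (h1 := Rabs_pos M). nra.
- exists (vnorm (F vzero)), vzero. rewrite norm0. split; auto; lra.
- exists c; exact hc.
Qed.

Lemma pn_ub (F : X -> Y) (x : X) : BL F -> vnorm x <= 1 -> vnorm (F x) <= pn F.
Proof. intros hF hx. apply (proj1 (pn_lub F hF)). exists x; auto. Qed.

Lemma pn_le (F : X -> Y) (M : R) : BL F ->
  (forall x, vnorm x <= 1 -> vnorm (F x) <= M) -> pn F <= M.
Proof. intros hF h. apply (proj2 (pn_lub F hF)). intros r [x [hx ->]]. auto. Qed.

Lemma pn_nonneg (F : X -> Y) : BL F -> 0 <= pn F.
Proof.
intro hF. eapply Rle_trans; [apply (norm_nonneg Y (F vzero))|]. apply pn_ub; auto.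
rewrite norm0; lra.
Qed.

Lemma pn_bound (F : X -> Y) (x : X) : BL F -> vnorm (F x) <= pn F * vnorm x.
Proof.
intro hF. destruct (classic (x = vzero)) as [-> | nx].
- rewrite lin_zero by apply hF. rewrite !norm0. lra.
- assert (hp := norm_pos X x nx).
  assert (H := pn_ub F (vscal (/ vnorm x) x) hF). rewrite norm_normalize in H; auto.
  rewrite (proj2 (proj1 hF)), vnorm_scal, Rabs_pos_eq in H
    by (left; apply Rinv_0_lt_compat; auto).
  assert (H' : / vnorm x * vnorm (F x) <= pn F) by (apply H; lra).
  apply (Rmult_le_compat_l (vnorm x)) in H'; [| lra].
  replace (vnorm x * (/ vnorm x * vnorm (F x))) with (vnorm (F x)) in H' by (field; lra).
  lra.
Qed.

Lemma BL_add (F G : X -> Y) : BL F -> BL G -> BL (fun x => vadd (F x) (G x)).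
Proof.
intros [[fa fs] [M hM]] [[ga gs] [N hN]]. split; [split|].
- intros x y. rewrite fa, ga. apply n_swap4.
- intros a x. rewrite fs, gs, vscal_addr. reflexivity.
- exists (M + N). intro x. eapply Rle_trans; [apply vnorm_triangle|].
  specialize (hM x); specialize (hN x). lra.
Qed.

Lemma BL_scal (a : R) (F : X -> Y) : BL F -> BL (fun x => vscal a (F x)).
Proof.
intros [[fa fs] [M hM]]. split; [split|].
- intros x y. rewrite fa, vscal_addr. reflexivity.
- intros b x. rewrite fs, !vscal_mul, Rmult_comm. reflexivity.
- exists (Rabs a * M). intro x. rewrite vnorm_scal, Rmult_assoc.
  apply Rmult_le_compat_l; [apply Rabs_pos| auto].
Qed.

Lemma pn_add (F G : X -> Y) : BL F -> BL G -> pn (fun x => vadd (F x) (G x)) <= pn F + pn G.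
Proof.
intros hF hG. apply pn_le; [apply BL_add; auto|]. intros x hx.
eapply Rle_trans; [apply vnorm_triangle|].
assert (h1 := pn_ub F x hF hx); assert (h2 := pn_ub G x hG hx). lra.
Qed.

Lemma pn_scal_le (a : R) (F : X -> Y) : BL F -> pn (fun x => vscal a (F x)) <= Rabs a * pn F.
Proof.
intros hF. apply pn_le; [apply BL_scal; auto|]. intros x hx. rewrite vnorm_scal.
apply Rmult_le_compat_l; [apply Rabs_pos| apply pn_ub; auto].
Qed.

Lemma pn_pos (t : R) (F : X -> Y) : 0 < t -> BL F -> pn (fun x => vscal t (F x)) = t * pn F.
Proof.
intros tp hF. apply Rle_antisym.
- assert (H := pn_scal_le t F hF). rewrite Rabs_pos_eq in H; lra.
- assert (H := pn_scal_le (/ t) (fun x => vscal t (F x)) (BL_scal t F hF)).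
  assert (E : (fun x => vscal (/ t) (vscal t (F x))) = F).
  { apply functional_extensionality; intro x. rewrite vscal_mul.
    replace (/ t * t) with 1 by (field; lra). apply vscal_1. }
  cbv beta in H. rewrite E, Rabs_pos_eq in H by (left; apply Rinv_0_lt_compat; auto).
  apply (Rmult_le_compat_l t) in H; [| lra].
  replace (t * (/ t * pn (fun x => vscal t (F x)))) with (pn (fun x => vscal t (F x))) in H
    by (field; lra). lra.
Qed.

Definition mk_op (F : X -> Y) (h : BL F) : BoundedOp X Y :=
  Build_BoundedOp X Y F (proj1 h) (proj2 h).

End Ops.

Section LC.
Variable X : NormedSpace.
Variable xs : nat -> X.

Lemma lc_ext (c d : nat -> R) (N : nat) :
  (forall k, (k < N)%nat -> c k = d k) -> lin_comb c xs N = lin_comb d xs N.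
Proof.
induction N as [|N IH]; intro h; simpl; auto.
rewrite IH by (intros; apply h; lia). rewrite h by lia. reflexivity.
Qed.

Lemma lc_zero (N : nat) : lin_comb (fun _ => 0) xs N = vzero.
Proof.
induction N as [|N IH]; simpl; auto. rewrite IH, n_scal0. apply n_add0r.
Qed.

Lemma lc_add (c d : nat -> R) (N : nat) :
  lin_comb (fun k => c k + d k) xs N = vadd (lin_comb c xs N) (lin_comb d xs N).
Proof.
induction N as [|N IH]; simpl.
- symmetry; apply vadd_0l.
- rewrite IH, vscal_addl. apply n_swap4.
Qed.

Lemma lc_scal (a : R) (c : nat -> R) (N : nat) :
  lin_comb (fun k => a * c k) xs N = vscal a (lin_comb c xs N).
Proof.
induction N as [|N IH]; simpl.
- symmetry; apply n_scalz.
- rewrite IH, vscal_addr, vscal_mul. reflexivity.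
Qed.

Lemma lc_extend (c : nat -> R) (N d : nat) :
  (forall k, (N <= k)%nat -> c k = 0) -> lin_comb c xs (N + d) = lin_comb c xs N.
Proof.
intro h. induction d as [|d IH].
- rewrite Nat.add_0_r. reflexivity.
- rewrite Nat.add_succ_r. simpl. rewrite IH, h by lia. rewrite n_scal0. apply n_add0r.
Qed.

Definition Span (m : X) : Prop :=
  exists N c, (forall k, (N <= k)%nat -> c k = 0) /\ m = lin_comb c xs N.

Lemma Span_add m1 m2 : Span m1 -> Span m2 -> Span (vadd m1 m2).
Proof.
intros [N [c [hc ->]]] [M [d [hd ->]]]. exists (N + M)%nat, (fun k => c k + d k). split.
- intros k hk. rewrite hc, hd by lia. ring.
- rewrite lc_add. rewrite (lc_extend c N M hc). rewrite Nat.add_comm, (lc_extend d M N hd).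
  reflexivity.
Qed.

Lemma Span_scal a m : Span m -> Span (vscal a m).
Proof.
intros [N [c [hc ->]]]. exists N, (fun k => a * c k). split.
- intros k hk. rewrite hc by lia. ring.
- rewrite lc_scal. reflexivity.
Qed.

Lemma Span_xs n : Span (xs n).
Proof.
exists (S n), (fun k => if Nat.eq_dec k n then 1 else 0). split.
- intros k hk. destruct (Nat.eq_dec k n); [lia| reflexivity].
- simpl. rewrite (lc_ext _ (fun _ => 0)).
  + rewrite lc_zero. destruct (Nat.eq_dec n n) as [_|]; [| tauto].
    rewrite vscal_1, vadd_0l. reflexivity.
  + intros k hk. destruct (Nat.eq_dec k n); [lia| reflexivity].
Qed.
End LC.

Section Main.
Variables X Y : NormedSpace.

Lemma rank1 (h : X -> R) (y : Y) : lin_fun h -> (forall x, Rabs (h x) <= vnorm x) ->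
  BL X Y (fun x => vscal (h x) y).
Proof.
intros [ha hs] hb. split; [split|].
- intros x x'. rewrite ha, vscal_addl. reflexivity.
- intros a x. rewrite hs, vscal_mul. reflexivity.
- exists (vnorm y). intro x. rewrite vnorm_scal, Rmult_comm.
  apply Rmult_le_compat_l; [apply norm_nonneg| apply hb].
Qed.

Lemma comp_functional (T : BoundedOp X Y) (x0 : X) (g : Y -> R) :
  vnorm x0 = 1 -> lin_fun g -> (forall y, Rabs (g y) <= vnorm y) ->
  0 < opnorm T -> g (T x0) = opnorm T ->
  op_unit_functional (fun S : BoundedOp X Y => g (S x0)).
Proof.
intros hx0 [ga gs] gb hT gT. split; [| split].
- intros S1 S2 U hU. rewrite hU. apply ga.
- intros a S U hU. rewrite hU. apply gs.
- split.
  + intros r [S [hS ->]]. eapply Rle_trans; [apply gb|].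
    eapply Rle_trans; [apply (pn_bound X Y (op X Y S) x0 (BL_op X Y S))|].
    rewrite hx0, Rmult_1_r. exact hS.
  + intros b ub. apply ub.
    exists (mk_op X Y (fun x => vscal (/ opnorm T) (T x)) (BL_scal X Y _ _ (BL_op X Y T))).
    split.
    * unfold opnorm at 1. fold (pn X Y (fun x => vscal (/ opnorm T) (T x))).
      eapply Rle_trans; [apply pn_scal_le; apply BL_op|].
      rewrite Rabs_pos_eq by (left; apply Rinv_0_lt_compat; auto).
      rewrite <- opnorm_pn. right. field. lra.
    * simpl. rewrite gs, gT. replace (/ opnorm T * opnorm T) with 1 by (field; lra).
      rewrite Rabs_R1. reflexivity.
Qed.

End Main.

Theorem theorem3p6 (X Y : NormedSpace) (T : BoundedOp X Y) :
  op_smooth T ->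
  (exists x, M_T T x) ->
  exists x0 : X,
    unit_sphere x0 /\
    (forall x, M_T T x <-> (x = x0 \/ x = vopp x0)) /\
    smooth (T x0) /\
    (forall xs : nat -> X, norming_sequence T xs -> in_closed_span xs x0).
Proof.
intros [[x1 nx1] [_ fu]] [x0 [hx0 hTx0]].
unfold unit_sphere in hx0.
assert (hT : 0 < opnorm T).
{ assert (n1 : x1 <> vzero) by (intro e; subst; apply nx1; apply lin_zero, op_linear).
  assert (p1 := norm_pos Y _ nx1). assert (p2 := norm_pos X _ n1).
  assert (b := pn_bound X Y (op X Y T) x1 (BL_op X Y T)). rewrite <- opnorm_pn in b.
  assert (nn := pn_nonneg X Y (op X Y T) (BL_op X Y T)). rewrite <- opnorm_pn in nn.
  destruct nn as [nn | nn]; auto. rewrite <- nn in b. lra. }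
assert (nz0 : T x0 <> vzero).
{ intro e. rewrite e, norm0 in hTx0. lra. }
destruct (support Y (T x0) nz0) as [g0 [g0l [g0b g0e]]].
rewrite hTx0 in g0e.
assert (nx0 : x0 <> vzero) by (intro e; rewrite e, norm0 in hx0; lra).
destruct (support X x0 nx0) as [h0 [h0l [h0b h0e]]]. rewrite hx0 in h0e.
assert (F0 := comp_functional X Y T x0 g0 hx0 g0l g0b hT g0e).
assert (F0T : g0 (T x0) = opnorm T) by exact g0e.
exists x0. split; [exact hx0| split; [| split]].
-
  intro x. split.
  + intros [hx hTx]. unfold unit_sphere in hx.
    assert (nzx : T x <> vzero) by (intro e; rewrite e, norm0 in hTx; lra).
    destruct (support Y (T x) nzx) as [g1 [g1l [g1b g1e]]]. rewrite hTx in g1e.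
    assert (F1 := comp_functional X Y T x g1 hx g1l g1b hT g1e).
    assert (Eq := fu _ _ F0 g0e F1 g1e).
    set (lam := g1 (T x0)).
    assert (key : forall h : X -> R, lin_fun h -> (forall z, Rabs (h z) <= vnorm z) ->
              h x0 * opnorm T = h x * lam).
    { intros h hl hb.
      assert (E := Eq (mk_op X Y _ (rank1 X Y h (T x0) hl hb))). simpl in E.
      rewrite (proj2 g0l), (proj2 g1l), g0e in E. exact E. }
    set (mu := lam / opnorm T).
    assert (w0 : vadd x0 (vscal (- mu) x) = vzero).
    { apply NNPP. intro nw. destruct (support X _ nw) as [h [hl [hb he]]].
      assert (pw := norm_pos X _ nw).
      assert (k := key h hl hb).
      rewrite (proj1 hl), (proj2 hl) in he.
      assert (e2 : h x0 = h x * mu) by (unfold mu; field_simplify_eq; [lra| lra]).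
      rewrite e2 in he. lra. }
    apply n_scal_eq_from in w0.
    assert (am : Rabs mu = 1).
    { rewrite w0, vnorm_scal, hx in hx0. lra. }
    unfold Rabs in am. destruct (Rcase_abs mu) as [_ | _].
    * right. assert (m1 : mu = -1) by lra. rewrite m1 in w0.
      rewrite n_opp_scal, w0, vscal_mul. replace (-1 * -1) with 1 by ring.
      rewrite vscal_1. reflexivity.
    * left. rewrite am in w0. rewrite w0, vscal_1. reflexivity.
  + intros [-> | ->].
    * split; auto.
    * unfold M_T, unit_sphere. rewrite n_opp_scal, norm_m1.
      rewrite (proj2 (op_linear X Y T)), norm_m1. auto.
-
  split; [exact nz0| split].
  + exists g0. split; [| rewrite hTx0; exact g0e].
    apply (unit_of_support Y g0 (T x0)); auto. rewrite hTx0; exact g0e.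
  + intros f g uf ef ug eg z.
    destruct (unit_bound Y f uf) as [fl fb]. destruct (unit_bound Y g ug) as [gl gb].
    rewrite hTx0 in ef, eg.
    assert (E := fu _ _ (comp_functional X Y T x0 f hx0 fl fb hT ef) ef
                        (comp_functional X Y T x0 g hx0 gl gb hT eg) eg
                        (mk_op X Y _ (rank1 X Y h0 z h0l h0b))).
    simpl in E. rewrite h0e, vscal_1 in E. exact E.
-
  intros xs [hxs cv].
  apply NNPP. intro ncs.
  assert (exists eps, 0 < eps /\ forall m, Span X xs m -> eps <= vnorm (vadd x0 (vopp m)))
    as [eps [ep hep]].
  { apply NNPP. intro H. apply ncs. intros eps ep. apply NNPP. intro H2. apply H.
    exists eps. split; auto. intros m [N [c [_ ->]]]. apply Rnot_lt_le. intro l.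
    apply H2. exists N, c. exact l. }
  destruct (hb_norm X (fun w a => exists m t, Span X xs m /\ w = vadd m (vscal t x0) /\ a = t * eps))
    as [h [hl [hb he]]].
  { split; [| split; [| split; [| split]]].
    - auto.
    - intros w a b [m1 [t1 [s1 [-> ->]]]] [m2 [t2 [s2 [E ->]]]].
      destruct (Req_dec t1 t2) as [<- | nt]; auto. exfalso.
      apply (vs_diff (vsN X)) in E. simpl in E.
      assert (sp : Span X xs (vscal (/ (t2 - t1)) (vadd m1 (vscal (-1) m2)))).
      { apply Span_scal, Span_add; auto. apply Span_scal; auto. }
      assert (H := hep _ sp). rewrite E, vscal_mul in H.
      replace (/ (t2 - t1) * (t2 - t1)) with 1 in H by (field; intro; apply nt; lra).
      rewrite vscal_1, vadd_oppr, norm0 in H. lra.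
    - intros u a w b [m1 [t1 [s1 [-> ->]]]] [m2 [t2 [s2 [-> ->]]]].
      exists (vadd m1 m2), (t1 + t2). split; [apply Span_add; auto| split].
      + simpl. rewrite n_swap4, vscal_addl. reflexivity.
      + ring.
    - intros r u a [m [t [sm [-> ->]]]]. exists (vscal r m), (r * t).
      split; [apply Span_scal; auto| split].
      + simpl. rewrite vscal_addr, vscal_mul. reflexivity.
      + ring.
    - intros w a [m [t [sm [-> ->]]]]. simpl.
      destruct (Rle_lt_dec t 0) as [tn | tp].
      + assert (nn := norm_nonneg X (vadd m (vscal t x0))). nra.
      + assert (sp : Span X xs (vscal (- / t) m)) by (apply Span_scal; auto).
        assert (H := hep _ sp).
        assert (E : vadd m (vscal t x0) = vscal t (vadd x0 (vopp (vscal (- / t) m)))).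
        { rewrite n_opp_scal, vscal_addr, !vscal_mul.
          replace (t * -1 * - / t) with 1 by (field; lra). rewrite vscal_1.
          apply vadd_comm. }
        rewrite E, vnorm_scal, Rabs_pos_eq by lra.
        apply Rmult_le_compat_l; lra. }
  { exists (vadd vzero (vscal 1 x0)), (1 * eps), vzero, 1. split; [| split; auto].
    exists O, (fun _ => 0). split; auto. }
  assert (hx0e : h x0 = eps).
  { assert (H := he (vadd vzero (vscal 1 x0)) (1 * eps)).
    rewrite vadd_0l, vscal_1, Rmult_1_l in H. apply H.
    exists vzero, 1. split; [exists O, (fun _ => 0); split; auto| split].
    - rewrite vadd_0l, vscal_1. reflexivity.
    - ring. }
  assert (hxs0 : forall n, h (xs n) = 0).
  { intro n. assert (H := he (vadd (xs n) (vscal 0 x0)) (0 * eps)).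
    rewrite n_scal0, n_add0r, Rmult_0_l in H. apply H.
    exists (xs n), 0. split; [apply Span_xs| split].
    - rewrite n_scal0, n_add0r. reflexivity.
    - ring. }
  set (Sf := fun x => vscal (h x) (T x0)).
  set (S := mk_op X Y Sf (rank1 X Y h (T x0) hl hb)).
  assert (Sxs : forall n, S (xs n) = vzero).
  { intro n. simpl. unfold Sf. rewrite hxs0. apply n_scal0. }
  set (comb := fun a b : R => (fun x => vadd (vscal a (T x)) (vscal b (S x))) : X -> Y).
  assert (BLc : forall a b, BL X Y (comb a b)).
  { intros a b. apply BL_add; apply BL_scal; apply BL_op. }
  assert (pp : forall t (F : VF X Y), 0 < t -> BL X Y F -> pn X Y (vs_scal t F) = t * pn X Y F).
  { intros t F tp hF. exact (pn_pos X Y t F tp hF). }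
  assert (pa : forall F G : VF X Y, BL X Y F -> BL X Y G -> pn X Y (vs_add F G) <= pn X Y F + pn X Y G).
  { intros F G hF hG. exact (pn_add X Y F G hF hG). }
  assert (ua : forall F G : VF X Y, BL X Y F -> BL X Y G -> BL X Y (vs_add F G)).
  { intros F G hF hG. exact (BL_add X Y F G hF hG). }
  assert (us : forall a (F : VF X Y), BL X Y F -> BL X Y (vs_scal a F)).
  { intros a F hF. exact (BL_scal X Y a F hF). }
  assert (normT : forall n, vnorm (T (xs n)) <= opnorm T).
  { intro n. rewrite opnorm_pn. apply pn_ub; [apply BL_op| rewrite hxs; lra]. }
  destruct (hahn_banach (VF X Y) (BL X Y) ua us (pn X Y) pa pp
     (fun w a => exists al be, w = comb al be /\ a = al * opnorm T)) as [Fb [Fa [Fs [Fd Fe]]]].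
  { split; [| split; [| split; [| split]]].
    - intros w a [al [be [-> ->]]]. apply BLc.
    - intros w a b [al [be [-> ->]]] [al' [be' [E ->]]].
      destruct (Req_dec al al') as [<- | na]; auto. exfalso.
      assert (z : forall n, T (xs n) = vzero).
      { intro n. assert (E2 := f_equal (fun F => F (xs n)) E). unfold comb in E2. simpl in E2.
        rewrite Sxs, !n_scalz, !n_add0r in E2. exact (n_scal_inj Y _ _ _ E2 na). }
      destruct (cv (opnorm T) hT) as [N hN]. specialize (hN N (le_n N)).
      unfold R_dist in hN. rewrite z, norm0 in hN.
      rewrite Rabs_minus_sym, Rminus_0_r, Rabs_pos_eq in hN; lra.
    - intros u a w b [al [be [-> ->]]] [al' [be' [-> ->]]].
      exists (al + al'), (be + be'). split; [| ring].
      apply functional_extensionality; intro x. unfold comb. simpl.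
      rewrite n_swap4, <- !vscal_addl. reflexivity.
    - intros t u a [al [be [-> ->]]]. exists (t * al), (t * be). split; [| ring].
      apply functional_extensionality; intro x. unfold comb. simpl.
      rewrite vscal_addr, !vscal_mul. reflexivity.
    - intros w a [al [be [-> ->]]].
      destruct (Rle_lt_dec al 0) as [an | ap].
      + assert (nn := pn_nonneg X Y _ (BLc al be)). nra.
      + apply Rnot_lt_le. intro lt.
        set (q := pn X Y (comb al be)) in *.
        assert (bn : forall n, al * vnorm (T (xs n)) <= q).
        { intro n. assert (H := pn_ub X Y (comb al be) (xs n) (BLc al be)).
          unfold comb in H. rewrite Sxs, n_scalz, n_add0r, vnorm_scal, Rabs_pos_eq in H by lra.
          apply H. rewrite hxs. lra. }
        assert (ee : 0 < opnorm T - q / al).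
        { apply (Rmult_lt_reg_l al); [lra|]. field_simplify; lra. }
        destruct (cv _ ee) as [N hN]. specialize (hN N (le_n N)). unfold R_dist in hN.
        specialize (bn N). assert (hn := normT N).
        rewrite Rabs_minus_sym, Rabs_pos_eq in hN by lra.
        assert (q / al < vnorm (T (xs N))) by lra.
        assert (al * (q / al) < al * vnorm (T (xs N))) by (apply Rmult_lt_compat_l; lra).
        replace (al * (q / al)) with q in * by (field; lra). lra. }
  { exists (comb 1 0), (1 * opnorm T), 1, 0. auto. }
  assert (eT : op X Y T = comb 1 0).
  { apply functional_extensionality; intro x. unfold comb.
    rewrite vscal_1, n_scal0, n_add0r. reflexivity. }
  assert (eS : op X Y S = comb 0 1).
  { apply functional_extensionality; intro x. unfold comb.
    rewrite vscal_1, n_scal0, vadd_0l. reflexivity. }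
  assert (FbT : Fb (op X Y T) = opnorm T) by (rewrite eT; rewrite (Fe _ (1 * opnorm T)); [ring| exists 1, 0; auto]).
  assert (FbS : Fb (op X Y S) = 0) by (rewrite eS; rewrite (Fe _ (0 * opnorm T)); [ring| exists 0, 1; auto]).
  assert (F2 : op_unit_functional (fun R0 : BoundedOp X Y => Fb (op X Y R0))).
  { split; [| split].
    - intros S1 S2 U hU.
      assert (e : op X Y U = vs_add (v := VF X Y) (op X Y S1) (op X Y S2))
        by (apply functional_extensionality; exact hU).
      rewrite e. apply Fa; apply BL_op.
    - intros a S1 U hU.
      assert (e : op X Y U = vs_scal (v := VF X Y) a (op X Y S1))
        by (apply functional_extensionality; exact hU).
      rewrite e. apply Fs; apply BL_op.
    - split.
      + intros r [R0 [hR ->]]. rewrite opnorm_pn in hR.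
        assert (h1 := Fd _ (BL_op X Y R0)).
        assert (h2 := Fd _ (us (-1) _ (BL_op X Y R0))).
        rewrite Fs in h2 by apply BL_op.
        assert (h3 := pn_scal_le X Y (-1) _ (BL_op X Y R0)). rewrite Rabs_m1 in h3.
        change (pn X Y (vs_scal (v := VF X Y) (-1) (op X Y R0)) <= 1 * pn X Y (op X Y R0)) in h3.
        apply Rabs_le. lra.
      + intros b ub. apply ub.
        exists (mk_op X Y (fun x => vscal (/ opnorm T) (T x)) (BL_scal X Y _ _ (BL_op X Y T))).
        split.
        * unfold opnorm at 1. fold (pn X Y (fun x => vscal (/ opnorm T) (T x))).
          eapply Rle_trans; [apply pn_scal_le; apply BL_op|].
          rewrite Rabs_pos_eq by (left; apply Rinv_0_lt_compat; auto).
          rewrite <- opnorm_pn. right. field. lra.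
        * simpl. change (fun x => vscal (/ opnorm T) (T x)) with (vs_scal (v := VF X Y) (/ opnorm T) (op X Y T)).
          rewrite Fs by apply BL_op. rewrite FbT.
          replace (/ opnorm T * opnorm T) with 1 by (field; lra). rewrite Rabs_R1. reflexivity. }
  assert (E := fu _ _ F0 g0e F2 FbT S).
  change (g0 (Sf x0) = Fb (op X Y S)) in E. unfold Sf in E. rewrite (proj2 g0l), g0e, hx0e in E.
  rewrite FbS in E.
  assert (0 < eps * opnorm T) by (apply Rmult_lt_0_compat; auto). lra.
Qed.
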